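(* Let $X$ be an antipodal distance-regular graph of diameter $3$ on $n$ vertices. If $X$ is not a cocktail-party graph, then $\mathrm{motion}(X)\geq\frac{1}{13}n$.
   Context: A distance-regular graph of diameter $d$ is a connected graph such that for vertices $v,w$ at distance $i$ the numbers of neighbours of $w$ at distance $i-1,i,i+1$ from $v$ are constants depending only on $i$. It is antipodal if being at distance $d$ or equal is an equivalence relation on vertices. A cocktail-party graph is a regular complete bipartite graph with one perfect matching removed. The motion of a graph is the minimum, over non-identity automorphisms, of the number of vertices not fixed. *)

(* Defs.v *)
From mathcomp Require Import all_boot all_fingroup.
Set Implicit Arguments. Unset Strict Implicit. Unset Printing Implicit Defensive.

Section Graphs.
Variables (T : finType) (e : rel T).

Definition simple_graph : Prop := symmetric e /\ irreflexive e.

Definition ball (k : nat) (x : T) : {set T} :=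
  iter k (fun A : {set T} => A :|: [set y | [exists z in A, e z y]]) [set x].

(* graph distance: least k with y in ball k x (equals #|T|.+1 if unreachable) *)
Definition dist (x y : T) : nat :=
  find (fun k => y \in ball k x) (iota 0 #|T|.+1).

Definition connected : Prop := forall x y : T, connect e x y.

Definition has_diameter (d : nat) : Prop :=
  connected /\ (forall x y, dist x y <= d) /\ (exists x y, dist x y = d).

Definition nbrs_at (v w : T) (j : nat) : {set T} :=
  [set u | e w u & dist v u == j].

Definition distance_regular : Prop :=
  connected /\
  exists p : nat -> nat -> nat, forall v w j,
    j \in [:: (dist v w).-1; dist v w; (dist v w).+1] ->
    #|nbrs_at v w j| = p (dist v w) j.

Definition antipodal_rel (d : nat) (x y : T) : bool := (x == y) || (dist x y == d).
Definition antipodal (d : nat) : Prop :=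
  reflexive (antipodal_rel d) /\ symmetric (antipodal_rel d) /\
  transitive (antipodal_rel d).

Definition is_automorphism (s : {perm T}) : Prop :=
  forall x y, e (s x) (s y) = e x y.

Definition moved (s : {perm T}) : nat := #|[set x | s x != x]|.
End Graphs.

(* K_{m,m} minus a perfect matching, on 'I_m * bool *)
Definition crown_rel (m : nat) : rel ('I_m * bool) :=
  fun u v => (u.2 != v.2) && (u.1 != v.1).

Definition is_cocktail_party (T : finType) (e : rel T) : Prop :=
  exists m : nat, exists f : T -> 'I_m * bool,
    bijective f /\ forall x y, e x y = crown_rel (f x) (f y).

(* Main.v *)
Require Import Defs.
From mathcomp Require Import all_boot all_fingroup.
From mathcomp Require Import zify.
Set Implicit Arguments. Unset Strict Implicit. Unset Printing Implicit Defensive.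

Section Main.
Variables (T : finType) (e : rel T) (pp : nat -> nat -> nat).
Hypothesis esymm : symmetric e.
Hypothesis eirr : irreflexive e.
Hypothesis econn : connected e.
Hypothesis hp : forall v w j, j \in [:: (dist e v w).-1; dist e v w; (dist e v w).+1] ->
    #|nbrs_at e v w j| = pp (dist e v w) j.
Hypothesis hdiam : forall x y, dist e x y <= 3.
Variables x0 y0 : T.
Hypothesis hx0y0 : dist e x0 y0 = 3.
Hypothesis htrans : transitive (antipodal_rel e 3).

Lemma ballS k x y : (y \in ball e k.+1 x) = (y \in ball e k x) || [exists z in ball e k x, e z y].
Proof. by rewrite /ball iterS !inE. Qed.

Lemma ball0 x y : (y \in ball e 0 x) = (y == x).
Proof. by rewrite /ball /= inE. Qed.

Lemma ball_mono k l x : k <= l -> {subset ball e k x <= ball e l x}.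
Proof.
move=> /subnKC <-; elim: (l - k) => [|j IH] y; first by rewrite addn0.
by move=> /IH; rewrite addnS ballS => ->.
Qed.

Lemma ball_path x p : path e x p -> last x p \in ball e (size p) x.
Proof.
elim/last_ind: p => [|p z IH]; first by rewrite ball0.
rewrite rcons_path size_rcons last_rcons => /andP[/IH H ez].
by rewrite ballS; apply/orP; right; apply/existsP; exists (last x p); rewrite H.
Qed.

Lemma ball_reach x y : y \in ball e #|T| x.
Proof.
have /connectP [p px ->] := econn x y.
case: (shortenP px) => p' pp' up' _.
apply: (ball_mono _ (ball_path pp')).
move/card_uniqP: up' => /= H; apply: ltnW; rewrite -H; exact: max_card.
Qed.

Lemma distP x y k : (dist e x y <= k) = (y \in ball e k x).
Proof.
rewrite /dist.
set P := (fun k => y \in ball e k x).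
have hasP : has P (iota 0 #|T|.+1).
  by apply/hasP; exists #|T|; [rewrite mem_iota add0n ltnSn | exact: ball_reach].
have lt := (find_size P (iota 0 #|T|.+1)).
have Hf := nth_find 0 hasP.
have ltf : find P (iota 0 #|T|.+1) < #|T|.+1.
  by move: hasP; rewrite has_find size_iota.
rewrite nth_iota // add0n in Hf.
apply/idP/idP => [le|yk].
  exact: ball_mono le _ Hf.
rewrite leqNgt; apply/negP => lt2.
have := before_find 0 lt2.
rewrite nth_iota; first by rewrite add0n /P yk.
exact: ltn_trans lt2 ltf.
Qed.

Lemma dist0 x y : (dist e x y == 0) = (y == x).
Proof. by rewrite -leqn0 distP ball0. Qed.

Lemma dist_xx x : dist e x x = 0.
Proof. by apply/eqP; rewrite dist0. Qed.

Lemma dist_leS k x y : (dist e x y <= k.+1) =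
  (dist e x y <= k) || [exists z, (dist e x z <= k) && e z y].
Proof.
rewrite distP ballS distP; congr (_ || _).
apply/existsP/existsP => [[z /andP[zb ez]]|[z /andP[zb ez]]]; exists z.
  by rewrite distP zb ez.
by rewrite -distP zb ez.
Qed.

Lemma dist_le1 x y : (dist e x y <= 1) = (y == x) || e x y.
Proof.
rewrite dist_leS leqn0 dist0; congr (_ || _).
apply/existsP/idP => [[z /andP[]]|exy]; first by rewrite leqn0 dist0 => /eqP ->.
by exists x; rewrite dist_xx.
Qed.

Lemma dist1 x y : (dist e x y == 1) = e x y.
Proof.
have := dist_le1 x y; have := dist0 x y.
case: (dist e x y) => [|[|n]] //=.
- move=> /esym/eqP -> _; by rewrite eirr.
- by move=> /esym/negbT; rewrite eq_sym => /negbTE -> /=.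
- move=> _ /esym /norP [_ /negbTE ->] //.
Qed.

Lemma dist_edge x y z : e y z -> dist e x z <= (dist e x y).+1.
Proof.
move=> eyz; rewrite dist_leS; apply/orP; right; apply/existsP; exists y.
by rewrite leqnn eyz.
Qed.

Lemma dist_edgeL y z w k : e y z -> dist e z w <= k -> dist e y w <= k.+1.
Proof.
move=> eyz; elim: k w => [|k IH] w.
  by rewrite leqn0 dist0 => /eqP ->; rewrite dist_le1 eyz orbT.
rewrite dist_leS => /orP[/IH H|/existsP[u /andP[/IH H euw]]].
  by rewrite dist_leS H.
by rewrite dist_leS; apply/orP; right; apply/existsP; exists u; rewrite H.
Qed.

Lemma dist_sym_le x y k : dist e x y <= k -> dist e y x <= k.
Proof.
elim: k x y => [|k IH] x y.
  by rewrite !leqn0 !dist0 eq_sym.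
rewrite dist_leS => /orP[/IH H|/existsP[z /andP[/IH H ezy]]].
  by rewrite dist_leS H.
by apply: dist_edgeL H; rewrite esymm.
Qed.

Lemma dist_sym x y : dist e x y = dist e y x.
Proof.
by apply/eqP; rewrite eqn_leq !(dist_sym_le (leqnn _)).
Qed.

Lemma dist_pred x y n : dist e x y = n.+1 -> exists z, e z y /\ dist e x z = n.
Proof.
move=> H; have := leqnn (dist e x y); rewrite {2}H dist_leS {1}H ltnn /=.
move=> /existsP[z /andP[zn ezy]]; exists z; split => //.
apply/eqP; rewrite eqn_leq zn /=.
have := dist_edge x ezy; rewrite H ltnS.
by case: n {H} zn => [|n] zn //.
Qed.

Lemma dist_common x y z : e x z -> e z y -> dist e x y <= 2.
Proof.
move=> exz ezy; have h1 := dist_edge x ezy.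
have h2 := dist_edge x exz; rewrite dist_xx in h2.
by apply: (leq_trans h1).
Qed.

Lemma aut_dist_le (s : {perm T}) x y k : is_automorphism e s ->
  dist e x y <= k -> dist e (s x) (s y) <= k.
Proof.
move=> As; elim: k y => [|k IH] y.
  by rewrite !leqn0 !dist0 => /eqP ->.
rewrite dist_leS => /orP[/IH H|/existsP[z /andP[/IH H ezy]]].
  by rewrite dist_leS H.
rewrite dist_leS; apply/orP; right; apply/existsP; exists (s z).
by rewrite H As ezy.
Qed.

Lemma aut_inv (s : {perm T}) : is_automorphism e s -> is_automorphism e s^-1.
Proof. by move=> As x y; rewrite -As !permKV. Qed.

Lemma aut_dist (s : {perm T}) x y : is_automorphism e s ->
  dist e (s x) (s y) = dist e x y.
Proof.
move=> As; apply/eqP; rewrite eqn_leq aut_dist_le //.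
have := @aut_dist_le s^-1 (s x) (s y) _ (aut_inv As) (leqnn _).
by rewrite !permK.
Qed.

Local Notation N x := [set y | e x y].
Local Notation anti := (antipodal_rel e 3).
Local Notation A b := [set y | antipodal_rel e 3 b y].
Local Notation kk := (pp 0 1).
Local Notation lam := (pp 1 1).
Local Notation mu := (pp 2 1).
Local Notation d := (dist e).

Lemma commonE x y : d x y <= 2 -> #|N x :&: N y| = pp (d x y) 1.
Proof.
move=> le2; rewrite -hp.
  by apply: eq_card => u; rewrite !inE dist1 andbC.
by move: le2; case: (d x y) => [|[|[|]]].
Qed.

Lemma degree x : #|N x| = kk.
Proof. by rewrite -(setIid (N x)) commonE dist_xx. Qed.

Lemma common1 x y : e x y -> #|N x :&: N y| = lam.
Proof. by rewrite -dist1 // => /eqP h; rewrite commonE h. Qed.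

Lemma common2 x y : d x y = 2 -> #|N x :&: N y| = mu.
Proof. by move=> h; rewrite commonE h. Qed.

Lemma dist_cases x y : [\/ d x y = 0, d x y = 1, d x y = 2 | d x y = 3].
Proof. by have := hdiam x y; case: (d x y) => [|[|[|[|]]]]; constructor. Qed.

Lemma p23 : 0 < pp 2 3.
Proof.
have [z [ezy dz]] := dist_pred hx0y0.
rewrite -dz -hp; last by rewrite dz.
by apply/card_gt0P; exists y0; rewrite /nbrs_at !inE ezy hx0y0 dz.
Qed.

Lemma exists_far x w : d x w = 2 -> exists u, e w u /\ d x u = 3.
Proof.
move=> h; have := p23; rewrite -h -hp; last by rewrite h.
by move=> /card_gt0P [u]; rewrite /nbrs_at !inE h => /andP[? /eqP ?]; exists u.
Qed.

Lemma antiC x y : anti x y = anti y x.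
Proof. by rewrite /antipodal_rel eq_sym dist_sym. Qed.

Lemma anti_refl x : anti x x.
Proof. by rewrite /antipodal_rel eqxx. Qed.

Lemma no_common x y z : d x y = 3 -> e z x -> e z y -> False.
Proof.
move=> h ezx ezy; have := @dist_common x y z.
by rewrite esymm ezx ezy h => /(_ isT isT).
Qed.

Lemma anti_common x y z : anti x y -> e z x -> e z y -> x = y.
Proof.
rewrite /antipodal_rel => /orP[/eqP //|/eqP h] ezx ezy.
by case: (no_common h ezx ezy).
Qed.

Lemma anti_adj x y : e x y -> anti x y = false.
Proof.
move=> exy; rewrite /antipodal_rel; apply/negbTE/norP; split.
  by apply/eqP => exy'; move: exy; rewrite exy' eirr.
by move: exy; rewrite -dist1 // => /eqP ->.
Qed.

Lemma nbr_fibre x b : ~~ anti b x -> exists y, e x y /\ anti b y.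
Proof.
rewrite /antipodal_rel => /norP[nbx nd3].
have [h|h|h|h] := dist_cases b x.
- by move/eqP: h; rewrite dist0 // eq_sym (negbTE nbx).
- by exists b; split; [rewrite -dist1 dist_sym h | exact: anti_refl].
- have [u [exu du]] := exists_far h; exists u; split => //.
  by rewrite /antipodal_rel du eqxx orbT.
- by move: nd3; rewrite h.
Qed.

Lemma anti_trans x y z : anti x y -> anti y z -> anti x z.
Proof. by move=> h1 h2; apply: htrans h1 h2. Qed.

Lemma fibre_nbr y b z : anti b y -> e y z -> ~~ anti b z.
Proof.
move=> aby eyz; apply/negP => abz.
have ayz : anti y z by apply: (anti_trans (y:=b)); rewrite // antiC.
by rewrite anti_adj in ayz.
Qed.

Lemma fibre_uniq b y1 y2 z : anti b y1 -> anti b y2 -> e z y1 -> e z y2 -> y1 = y2.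
Proof.
move=> h1 h2 e1 e2; apply: (anti_common (z:=z)) => //.
by apply: (anti_trans (y:=b)); rewrite // antiC.
Qed.

Lemma sum_nbrs y : \sum_z (e y z : nat) = #|N y|.
Proof.
rewrite -sum1_card [RHS]big_mkcond /=; apply: eq_bigr => z _; rewrite inE.
by case: (e y z).
Qed.

Lemma fibre_card b : #|T| = #|A b| * kk.+1.
Proof.
rewrite -(cardsC (A b)).
have -> : #|~: A b| = \sum_(y in A b) #|N y|.
  rewrite -sum1_card.
  transitivity (\sum_(z in ~: A b) \sum_(y in A b) (e z y : nat)).
    apply: eq_bigr => z; rewrite !inE => zC.
    have [y [ezy aby]] := nbr_fibre zC.
    rewrite (bigD1 y) ?inE //= ezy big1 //= => y' /andP[]; rewrite inE => aby' ny'.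
    case ezy': (e z y') => //.
    by move: ny'; rewrite (fibre_uniq aby' aby ezy' ezy) eqxx.
  rewrite exchange_big; apply: eq_bigr => y; rewrite inE => aby.
  rewrite -sum_nbrs [RHS](bigID (fun z => z \in ~: A b)) /= [X in _ = _ + X]big1 ?addn0.
    by apply: eq_bigr => z _; rewrite esymm.
  move=> z; rewrite !inE negbK => abz.
  case eyz : (e y z) => //.
  by have := fibre_nbr aby eyz; rewrite abz.
by rewrite (eq_bigr (fun _ => kk)) ?sum_nat_const ?mulnS // => y _; rewrite degree.
Qed.

Lemma fibre_size_eq b c : #|A b| = #|A c|.
Proof.
have := fibre_card b; rewrite (fibre_card c) => /eqP; rewrite eqn_pmul2r //.
by move/eqP.
Qed.

Lemma card_le_union (X Y Z : {set T}) :
  (forall w, w \in X -> (w \in Y) || (w \in Z)) -> #|X| <= #|Y| + #|Z|.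
Proof.
move=> H; apply: leq_trans (leq_card_setU Y Z).
by apply: subset_leq_card; apply/subsetP => w /H; rewrite inE.
Qed.

Lemma S_card x u : e x u -> #|N x :\: (u |: N u)| + lam + 1 = kk.
Proof.
move=> exu; rewrite -(degree x) -(cardsID (u |: N u) (N x)).
have -> : N x :&: (u |: N u) = u |: (N x :&: N u).
  apply/setP => w; rewrite !inE.
  by case: (eqVneq w u) => [->|]; rewrite ?exu //= andbT.
rewrite cardsU1 !inE eirr /= common1 //; lia.
Qed.

Lemma d2_setup x y : d x y = 2 ->
  exists u v, [/\ e x u, anti y u, e x v & e v y].
Proof.
move=> h.
have nyx : ~~ anti y x.
  rewrite /antipodal_rel dist_sym h /= orbF; apply/eqP => yx.
  by move: h; rewrite yx dist_xx.
have [u [exu ayu]] := nbr_fibre nyx.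
have [v [evy dv]] := dist_pred h.
by exists u, v; split => //; rewrite -dist1 dv.
Qed.

Lemma mu_le_sub x y u : d x y = 2 -> e x u -> anti y u ->
  N x :&: N y \subset N x :\: (u |: N u).
Proof.
move=> h exu ayu; apply/subsetP => w; rewrite !inE.
move=> /andP[exw eyw]; rewrite exw andbT negb_or; apply/andP; split.
  by apply/eqP => wu; move: ayu; rewrite -wu anti_adj.
apply/negP => euw.
have uy : u = y by apply: (anti_common (z:=w)); [by rewrite antiC | by rewrite esymm | by rewrite esymm].
by move: exu; rewrite uy -dist1 h.
Qed.

Lemma mu_le x y u : d x y = 2 -> e x u -> anti y u ->
  #|N x :&: N y| <= #|N x :\: (u |: N u)|.
Proof. by move=> h exu ayu; apply: subset_leq_card; apply: mu_le_sub. Qed.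

Lemma mu_lam_k : mu + lam + 1 <= kk.
Proof.
have [z [_ dz]] := dist_pred hx0y0.
have [u [v [exu ayu _ _]]] := d2_setup dz.
have := mu_le dz exu ayu; rewrite common2 // => h.
have := S_card exu; lia.
Qed.

Lemma lam_le : 3 * lam + 4 <= 2 * kk.
Proof.
have [y [_ h]] := dist_pred hx0y0.
have [u [v [exu ayu exv evy]]] := d2_setup h.
have nuv : ~~ e u v.
  apply/negP => euv.
  have uy : u = y by apply: (anti_common (z:=v)); [by rewrite antiC | by rewrite esymm | by []].
  by move: exu; rewrite uy -dist1 h.
have uv : u != v by apply/eqP => uv; move: ayu; rewrite uv antiC anti_adj.
have duv : d u v = 2.
  have [H|H|H|H] := dist_cases u v => //.
  - by move/eqP: H; rewrite dist0 eq_sym (negbTE uv).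
  - by move/eqP: H; rewrite dist1 (negbTE nuv).
  - by case: (no_common H exu exv).
have c1 := common2 duv.
have c2 : #|N x0 :&: N v| = lam by rewrite common1.
have H3 := S_card exu.
have H4 := mu_lam_k.
have vS : v \in N x0 :\: (u |: N u) by rewrite !inE exv (negbTE nuv) eq_sym (negbTE uv).
have xC : x0 \in N u :&: N v by rewrite !inE [e u x0]esymm [e v x0]esymm exu exv.
have e1 := cardsD1 x0 (N u :&: N v); have e2 := cardsD1 v (N x0 :\: (u |: N u)).
rewrite xC vS in e1 e2.
have := @card_le_union (N x0 :&: N v) ((N u :&: N v) :\ x0) ((N x0 :\: (u |: N u)) :\ v).
have key : forall w, w \in N x0 :&: N v ->
    (w \in (N u :&: N v) :\ x0) || (w \in (N x0 :\: (u |: N u)) :\ v).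
  move=> w; rewrite !inE => /andP[exw evw].
  have wx : (w != x0) by apply/eqP => wx; move: exw; rewrite wx eirr.
  have wv : (w != v) by apply/eqP => wv; move: evw; rewrite wv eirr.
  case euw : (e u w); first by rewrite wx evw.
  apply/orP; right; rewrite wv exw orbF andbT /=.
  by apply/eqP => wu; move: nuv; rewrite -wu esymm evw.
move=> /(_ key); rewrite c2; lia.
Qed.

Lemma d2_far x y : d x y = 2 -> ~~ anti y x.
Proof.
move=> h; rewrite /antipodal_rel dist_sym h /= orbF; apply/eqP => yx.
by move: h; rewrite yx dist_xx.
Qed.

Lemma mu_R3 : 3 <= #|A x0| -> 2 * mu + lam + 1 <= kk.
Proof.
move=> R3.
have [y [_ h]] := dist_pred hx0y0.
have [u [v [exu ayu exv evy]]] := d2_setup h.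
have R3y : 3 <= #|A y| by rewrite (fibre_size_eq y x0).
have : 0 < #|A y :\: [set y; u]|.
  rewrite cardsD; have := subset_leq_card (subsetIr (A y) [set y; u]).
  rewrite cards2; case: (y != u) => /=; lia.
move=> /card_gt0P [y2]; rewrite !inE negb_or => /andP[/andP[y2y y2u] ayy2].
have ay2u : anti y2 u by apply: (anti_trans (y:=y)); rewrite // antiC.
have h2 : d x0 y2 = 2.
  have [H|H|H|H] := dist_cases x0 y2 => //.
  - move/eqP: H; rewrite dist0 => /eqP y2x; move: (d2_far h).
    by rewrite -y2x ayy2.
  - move/eqP: H; rewrite dist1 => exy2.
    by move: y2u; rewrite (fibre_uniq ayy2 ayu exy2 exu) eqxx.
  - have : anti y x0 by apply: (anti_trans (y:=y2)); rewrite // /antipodal_rel dist_sym H eqxx orbT.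
    by rewrite (negbTE (d2_far h)).
have c1 := mu_le h exu ayu; have c2 := mu_le h2 exu ay2u.
rewrite !common2 // in c1 c2.
have Sc := S_card exu.
have : #|(N x0 :&: N y) :|: (N x0 :&: N y2)| <= #|N x0 :\: (u |: N u)|.
  apply: subset_leq_card; apply/subsetP => w; rewrite inE => /orP[] H.
    by apply/(subsetP (mu_le_sub h exu ayu)).
  by apply/(subsetP (mu_le_sub h2 exu ay2u)).
have -> : #|(N x0 :&: N y) :|: (N x0 :&: N y2)| = mu + mu.
  rewrite cardsU !common2 //.
  suff -> : #|(N x0 :&: N y) :&: (N x0 :&: N y2)| = 0 by rewrite subn0.
  apply/eqP; rewrite cards_eq0; apply/eqP/setP => w; rewrite !inE.
  apply/negbTE/negP => /andP[/andP[_ eyw] /andP[_ ey2w]].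
  have yy2 : y = y2.
    by apply: (anti_common (z:=w)); [by [] | rewrite esymm | rewrite esymm].
  by move: y2y; rewrite yy2 eqxx.
lia.
Qed.

Lemma fibre2_eq b a c z : #|A b| = 2 -> anti b a -> anti b c -> anti b z ->
  a != c -> z != a -> z = c.
Proof.
move=> h2 ba bc bz ac za.
have E : [set a; c] = A b.
  apply/eqP; rewrite eqEcard h2 cards2 ac andbT.
  by apply/subsetP => w; rewrite !inE => /orP[]/eqP ->.
have : z \in [set a; c] by rewrite E inE.
by rewrite !inE (negbTE za) => /eqP.
Qed.

Lemma lam_R2 : #|A x0| = 2 -> 0 < lam -> kk + 1 <= 3 * lam.
Proof.
move=> R2 lam0.
have R2' b : #|A b| = 2 by rewrite (fibre_size_eq b x0).
have : 0 < #|N x0| by rewrite degree; have := mu_lam_k; lia.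
move=> /card_gt0P [u]; rewrite inE => exu.
have : 0 < #|N x0 :&: N u| by rewrite common1.
move=> /card_gt0P [v]; rewrite !inE => /andP[exv euv].
set S := [set w in N x0 | [&& w != u, w != v, ~~ e u w & ~~ e v w]].
have nbr_ok z w : w \in S -> (z == u) || (z == v) -> exists y, e z y /\ anti w y.
  rewrite !inE => /andP[exw /and4P[wu wv nuw nvw]] hz.
  apply: nbr_fibre; rewrite /antipodal_rel negb_or; apply/andP; split.
    by case/orP: hz => /eqP ->.
  apply/negP => /eqP H.
  case/orP: hz => /eqP zz; subst z; [exact: no_common H exw exu | exact: no_common H exw exv].
pose f w := odflt w [pick z | e u z && anti w z].
have fP w : w \in S -> e u (f w) && anti w (f w).
  move=> wS; rewrite /f; case: pickP => [z //|none].
  have [y [euy awy]] := nbr_ok u w wS (introT orP (or_introl (eqxx u))).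
  by move: (none y); rewrite euy awy.
have fS w : w \in S -> f w \in (N u :&: N v) :\ x0.
  move=> wS; have /andP[euf awf] := fP w wS.
  move: (wS); rewrite !inE => /andP[exw /and4P[wu wv nuw nvw]].
  have fw : f w != w by apply/eqP => fw; move: euf; rewrite fw (negbTE nuw).
  have [y [evy awy]] := nbr_ok v w wS (introT orP (or_intror (eqxx v))).
  have yw : y != w by apply/eqP => yw; move: evy; rewrite yw (negbTE nvw).
  have wf : w != f w by rewrite eq_sym.
  have yf := fibre2_eq (R2' w) (anti_refl w) awf awy wf yw.
  rewrite euf -yf evy !andbT.
  apply/eqP => yx; move: awy; rewrite yx antiC anti_adj //.
have finj : {in S &, injective f}.
  move=> w1 w2 w1S w2S fe.
  have /andP[_ a1] := fP w1 w1S; have /andP[_ a2] := fP w2 w2S.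
  rewrite fe in a1.
  move: w1S w2S; rewrite !inE => /andP[ex1 _] /andP[ex2 _].
  apply: (anti_common (z:=x0)) => //.
  by apply: (anti_trans a1); rewrite antiC.
have xC : x0 \in N u :&: N v by rewrite !inE [e u x0]esymm [e v x0]esymm exu exv.
have cS : #|S| + 1 <= lam.
  rewrite -(card_in_imset finj) -(common1 euv) (cardsD1 x0 (N u :&: N v)) xC addnC leq_add2l.
  apply: subset_leq_card; apply/subsetP => z /imsetP [w wS ->]; exact: fS.
have c1 := common1 exu; have c2 := common1 exv.
have := @card_le_union (N x0) S ((N x0 :&: N u) :|: (N x0 :&: N v)).
have cU := leq_of_leqif (leq_card_setU (N x0 :&: N u) (N x0 :&: N v)).
have key : forall w, w \in N x0 ->
    (w \in S) || (w \in (N x0 :&: N u) :|: (N x0 :&: N v)).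
  move=> w; rewrite !inE => exw; rewrite exw /=.
  case: (eqVneq w u) => [->|wu]; first by rewrite esymm euv orbT.
  case: (eqVneq w v) => [->|wv]; first by rewrite euv.
  by case: (e u w); case: (e v w).
move=> /(_ key); rewrite degree; lia.
Qed.

Lemma card_bigcup_le (B : {set T}) (F : T -> {set T}) :
  #|\bigcup_(b in B) F b| <= \sum_(b in B) #|F b|.
Proof.
elim/big_rec2: _ => [|i n U _ IH]; first by rewrite cards0.
apply: leq_trans (leq_of_leqif (leq_card_setU _ _)) _; by rewrite leq_add2l.
Qed.

Lemma cross_edge (P : {set T}) a b : a \in P -> b \notin P ->
  exists x y, [/\ x \in P, y \notin P & e x y].
Proof.
have /connectP [q pth ->] := econn a b.
elim: q a pth => [|c q IH] a /=; first by move=> _ ->.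
move=> /andP[eac pth] aP lNP.
case cP: (c \in P); first exact: IH pth cP lNP.
by exists a, c; rewrite cP eac.
Qed.

Lemma aut_anti (s : {perm T}) a b : is_automorphism e s -> anti (s a) (s b) = anti a b.
Proof.
by move=> As; rewrite /antipodal_rel aut_dist // (inj_eq perm_inj).
Qed.

Lemma main_bound (s : {perm T}) : is_automorphism e s -> s != 1%g ->
  3 * maxn lam mu <= 2 * kk -> #|T| <= 13 * moved s.
Proof.
move=> As s1 cb.
set F := [set x | s x == x].
have mvE : moved s = #|~: F|.
  by rewrite /moved; apply: eq_card => x; rewrite !inE.
have [F0|[x0' xF]] := set_0Vmem F.
  rewrite mvE F0 setC0 cardsT; lia.
have [b0 bF] : exists b, b \notin F.
  apply/existsP; move: s1; apply: contraR; rewrite negb_exists => /forallP H.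
  apply/eqP/permP => z; move: (H z); rewrite !inE negbK perm1 => /eqP //.
have [x [y [xF' yF exy]]] := cross_edge xF bF.
move: xF' yF; rewrite !inE => /eqP sx syy.
have exsy : e x (s y) by rewrite -{1}sx As.
have ns : ~~ anti y (s y).
  by apply/negP => ay; move: syy; rewrite -(anti_common ay exy exsy) eqxx.
have anti_sy : forall b, anti y b -> anti b (s b) -> False.
  move=> b ab abs; move: ns; apply/negP/negPn.
  apply: (anti_trans ab); apply: (anti_trans abs).
  by rewrite aut_anti // antiC.
have fix_sub : F \subset \bigcup_(b in A y) (N b :&: N (s b)).
  apply/subsetP => z; rewrite inE => /eqP sz.
  have nyz : ~~ anti y z.
    apply/negP => ayz; move: ns; apply/negP/negPn.
    by apply: (anti_trans ayz); rewrite -{1}sz aut_anti // antiC.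
  have [b [ezb ayb]] := nbr_fibre nyz.
  apply/bigcupP; exists b; first by rewrite inE.
  by rewrite !inE esymm ezb /= esymm -{1}sz As.
have cb' : forall b, b \in A y -> #|N b :&: N (s b)| <= maxn lam mu.
  move=> b; rewrite inE => ayb.
  have [H|H|H|H] := dist_cases b (s b).
  - move/eqP: H; rewrite dist0 => /eqP sb.
    by case: (anti_sy b ayb); rewrite sb anti_refl.
  - by rewrite common1 ?leq_maxl // -dist1 H.
  - by rewrite common2 ?leq_maxr.
  - by case: (anti_sy b ayb); rewrite /antipodal_rel H eqxx orbT.
have cF : #|F| <= #|A y| * maxn lam mu.
  apply: leq_trans (subset_leq_card fix_sub) _.
  apply: leq_trans (card_bigcup_le _ _) _.
  rewrite -sum_nat_const; exact: leq_sum.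
have cT := fibre_card y.
have cC := cardsC F.
rewrite mvE.
set R := #|A y| in cF cT; set c := maxn lam mu in cF cb.
have h1 : 13 * c <= 12 * kk.+1 by lia.
have h2 : R * (13 * c) <= R * (12 * kk.+1) by rewrite leq_mul2l h1 orbT.
nia.
Qed.

Section Crown.
Hypothesis R2 : #|A x0| = 2.
Hypothesis lam0 : lam = 0.

Let R2' b : #|A b| = 2.
Proof. by rewrite (fibre_size_eq b x0). Qed.

Definition an v := odflt v [pick z | d v z == 3].

Lemma an_spec v : d v (an v) = 3.
Proof.
rewrite /an; case: pickP => [z /eqP //|none].
have : 0 < #|A v :\ v|.
  by have := cardsD1 v (A v); rewrite R2' inE anti_refl /=; lia.
move=> /card_gt0P [z].
rewrite !inE => /andP[zv]; rewrite /antipodal_rel eq_sym (negbTE zv) /=.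
by rewrite none.
Qed.

Lemma an_neq v : an v != v.
Proof. by apply/eqP => h; have := an_spec v; rewrite h dist_xx. Qed.

Lemma an_uniq v z : d v z = 3 -> z = an v.
Proof.
move=> h; apply: (fibre2_eq (R2' v) (anti_refl v)).
- by rewrite /antipodal_rel an_spec eqxx orbT.
- by rewrite /antipodal_rel h eqxx orbT.
- by rewrite eq_sym an_neq.
- by apply/eqP => zv; move: h; rewrite zv dist_xx.
Qed.

Lemma an_invol v : an (an v) = v.
Proof. by apply/esym/an_uniq; rewrite dist_sym an_spec. Qed.

Lemma anti_an v z : anti v z = (z == v) || (z == an v).
Proof.
rewrite /antipodal_rel eq_sym; congr (_ || _).
apply/eqP/eqP => [/an_uniq //|->]; exact: an_spec.
Qed.

Lemma G1 v : d x0 v = 2 -> e x0 (an v).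
Proof.
move=> h; have [w [exw avw]] := nbr_fibre (d2_far h).
move: avw; rewrite anti_an => /orP[/eqP wv|/eqP wa]; last by rewrite -wa.
by move: exw; rewrite wv -dist1 h.
Qed.

Lemma G5 v : d x0 v = 2 -> e v (an x0).
Proof.
move=> h; have [u [evu du]] := exists_far h.
by rewrite -(an_uniq du).
Qed.

Lemma G2 v : d x0 v = 1 -> d x0 (an v) = 2.
Proof.
move=> h; have [H|H|H|H] := dist_cases x0 (an v) => //.
- move/eqP: H; rewrite dist0 => /eqP ax.
  by have := an_spec v; rewrite ax dist_sym h.
- move/eqP: H; rewrite dist1 => exa.
  have exv : e x0 v by rewrite -dist1 h.
  have ava : anti v (an v) by rewrite anti_an eqxx orbT.
  have := fibre_uniq (anti_refl v) ava exv exa.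
  by move=> vv; move: (an_neq v); rewrite -vv eqxx.
- have : anti x0 v.
    apply: (anti_trans (y := an v)); first by rewrite /antipodal_rel H eqxx orbT.
    by rewrite anti_an an_invol eqxx orbT.
  by rewrite /antipodal_rel h /= orbF => /eqP xv; move: h; rewrite -xv dist_xx.
Qed.

Lemma same_level v w : d x0 v = d x0 w -> e v w -> False.
Proof.
move=> hvw evw.
have lam_no a b c : e a b -> e a c -> e b c -> False.
  move=> eab eac ebc; have := common1 eab; rewrite lam0 => /eqP; rewrite cards_eq0.
  by move=> /eqP/setP/(_ c); rewrite !inE eac ebc.
have [H|H|H|H] := dist_cases x0 v.
- move/eqP: (H); rewrite dist0 => /eqP vx; move/eqP: H; rewrite hvw dist0 => /eqP wx.
  by move: evw; rewrite vx wx eirr.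
- move/eqP: (H); rewrite dist1 => exv; move/eqP: H; rewrite hvw dist1 => exw.
  exact: lam_no exv exw evw.
- have e1 := G5 H; rewrite hvw in H; have e2 := G5 H.
  by apply: (lam_no v w (an x0)) => //.
- have v1 := an_uniq H; rewrite hvw in H; have w1 := an_uniq H.
  by move: evw; rewrite v1 w1 eirr.
Qed.

Lemma G4 v w : e v w -> odd (d x0 v) != odd (d x0 w).
Proof.
move=> evw; have h1 := dist_edge x0 evw.
have ewv : e w v by rewrite esymm.
have h2 := dist_edge x0 ewv.
have [Hv|Hv|Hv|Hv] := dist_cases x0 v; have [Hw|Hw|Hw|Hw] := dist_cases x0 w;
  rewrite ?Hv ?Hw //=; rewrite ?Hv ?Hw in h1 h2 => //;
  by case: (same_level (etrans Hv (esym Hw)) evw).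
Qed.

Lemma ava v : anti v (an v).
Proof. by rewrite anti_an eqxx orbT. Qed.

Lemma G6 v w : ~~ odd (d x0 v) -> odd (d x0 w) -> e v w = (an v != w).
Proof.
move=> ov ow.
have [Hv|Hv|Hv|Hv] := dist_cases x0 v; rewrite ?Hv // in ov;
  have [Hw|Hw|Hw|Hw] := dist_cases x0 w; rewrite ?Hw // in ow.
- move/eqP: Hv; rewrite dist0 => /eqP ->.
  have -> : e x0 w by rewrite -dist1 Hw.
  by apply/esym/eqP => aw; move: (an_spec x0); rewrite aw Hw.
- move/eqP: Hv; rewrite dist0 => /eqP ->.
  by rewrite -(an_uniq Hw) eqxx; apply/negbTE; rewrite -dist1 Hw.
- case: (eqVneq (an v) w) => [<-|aw].
    by apply/negbTE/negP => /anti_adj; rewrite ava.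
  have nwv : ~~ anti w v.
    rewrite anti_an negb_or; apply/andP; split.
      by apply/eqP => vw; move: Hv; rewrite vw Hw.
    by apply/eqP => vaw; move: aw; rewrite vaw an_invol eqxx.
  have [z [evz awz]] := nbr_fibre nwv.
  move: awz; rewrite anti_an => /orP[/eqP zw|/eqP za]; first by rewrite -zw.
  have := G2 Hw; rewrite -za => Hz.
  by case: (same_level (etrans Hv (esym Hz)) evz).
- rewrite (an_uniq Hw) (G5 Hv); apply/esym/eqP => aa.
  have : v = x0 by rewrite -(an_invol v) aa an_invol.
  by move=> vx; move: Hv; rewrite vx dist_xx.
Qed.

Definition Bset := [set v | odd (d x0 v)].
Definition gg v := if odd (d x0 v) then v else an v.

Lemma xB : an x0 \in Bset.
Proof. by rewrite inE an_spec. Qed.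

Lemma gB v : gg v \in Bset.
Proof.
rewrite /gg inE; case ov: (odd (d x0 v)) => //.
have [H|H|H|H] := dist_cases x0 v; rewrite H // in ov.
- by move/eqP: H; rewrite dist0 => /eqP ->; rewrite an_spec.
- by have /eqP -> : d x0 (an v) == 1 by rewrite dist1 G1.
Qed.

Lemma an_odd v : v \in Bset -> an v \notin Bset.
Proof.
rewrite !inE => ov.
have [H|H|H|H] := dist_cases x0 v; rewrite H // in ov.
- by rewrite G2.
- by rewrite (an_uniq H) an_invol dist_xx.
Qed.

Definition fc v : 'I_#|Bset| * bool := (enum_rank_in xB (gg v), odd (d x0 v)).

Lemma fc1 v w : ((fc v).1 == (fc w).1) = (gg v == gg w).
Proof.
rewrite /fc /=; apply/eqP/eqP => [h|->] //.
exact: (enum_rank_in_inj (gB v) (gB w) h).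
Qed.

Lemma fc_inj : injective fc.
Proof.
move=> v w [/eqP]; rewrite -[_ == _]/((fc v).1 == (fc w).1) fc1 => /eqP hg ho.
move: hg; rewrite /gg ho; case: (odd (d x0 w)) => // hv.
by rewrite -(an_invol v) hv an_invol.
Qed.

Lemma crown_ok : is_cocktail_party e.
Proof.
exists #|Bset|, fc; split.
  apply: inj_card_bij fc_inj _.
  rewrite card_prod card_ord card_bool -(cardsC Bset).
  suff : #|Bset| <= #|~: Bset| by lia.
  have <- : #|an @: Bset| = #|Bset|.
    by apply: card_in_imset => a b _ _ h; rewrite -(an_invol a) h an_invol.
  apply: subset_leq_card; apply/subsetP => z /imsetP [v vB ->].
  by rewrite inE an_odd.
move=> v w; rewrite /crown_rel fc1 /gg /=.
case ov: (odd (d x0 v)); case ow: (odd (d x0 w)) => /=.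
- by apply/negbTE/negP => /G4; rewrite ov ow.
- by rewrite esymm (G6 (negbT ow) ov) eq_sym.
- by rewrite (G6 (negbT ov) ow).
- by apply/negbTE/negP => /G4; rewrite ov ow.
Qed.

End Crown.

Lemma final_in : ~ is_cocktail_party e -> forall s : {perm T},
  is_automorphism e s -> s != 1%g -> #|T| <= 13 * moved s.
Proof.
move=> ncp s As s1; apply: main_bound => //.
have L := lam_le; have M := mu_lam_k.
have R2 : 2 <= #|A x0|.
  have : [set x0; y0] \subset A x0.
    apply/subsetP => z; rewrite !inE => /orP[]/eqP ->; first exact: anti_refl.
    by rewrite /antipodal_rel hx0y0 eqxx orbT.
  move/subset_leq_card; rewrite cards2.
  suff -> : x0 != y0 by [].
  by apply/eqP => xy; move: hx0y0; rewrite xy dist_xx.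
have [R3|R2'] : 3 <= #|A x0| \/ #|A x0| = 2 by lia.
  have := mu_R3 R3; lia.
case: (posnP lam) => [l0|lp].
  by case: ncp; apply: crown_ok.
have := lam_R2 R2' lp; lia.
Qed.

End Main.

Unset Implicit Arguments.
Set Strict Implicit.

Theorem proposition5p10 (T : finType) (e : rel T) :
  simple_graph e ->
  distance_regular e ->
  has_diameter e 3 ->
  antipodal e 3 ->
  ~ is_cocktail_party e ->
  forall s : {perm T}, is_automorphism e s -> s != 1%g ->
    #|T| <= 13 * moved s.
Proof.
move=> [esymm eirr] [econn [pp hp]] [_ [hdiam [x0 [y0 hxy]]]] [_ [_ htrans]].
exact: (final_in esymm eirr econn hp hdiam hxy htrans).
Qed.
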